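(* Let $\mathscr H$ be a complex Hilbert space and $\mathbf{X},\mathbf{Y},\mathbf{Z},\mathbf{W}\in\mathbb{B}(\mathscr H)^d$. Then $$w_e\left(\begin{bmatrix}\mathbf{X}&\mathbf{Y}\\\mathbf{Z}&\mathbf{W}\end{bmatrix}\right)\ge\max\Big\{w_e(\mathbf{X}),w_e(\mathbf{W}),w_e\Big(\tfrac{\mathbf{Y}+\mathbf{Z}}{2}\Big),w_e\Big(\tfrac{\mathbf{Y}-\mathbf{Z}}{2}\Big)\Big\}$$ and $$w_e\left(\begin{bmatrix}\mathbf{X}&\mathbf{Y}\\\mathbf{Z}&\mathbf{W}\end{bmatrix}\right)\le\max\{w_e(\mathbf{X}),w_e(\mathbf{W})\}+w_e\Big(\tfrac{\mathbf{Y}+\mathbf{Z}}{2}\Big)+w_e\Big(\tfrac{\mathbf{Y}-\mathbf{Z}}{2}\Big).$$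
   Context: $\mathbb{B}(\mathscr H)$ denotes the bounded linear operators on $\mathscr H$. $w_e(\mathbf{T})=\sup\{(\sum_{k}|\langle T_kx,x\rangle|^2)^{1/2}: \|x\|=1\}$ for $\mathbf{T}=(T_1,\dots,T_d)$. Tuple sums and scalar multiples are componentwise. For $d$-tuples, $\begin{bmatrix}\mathbf{X}&\mathbf{Y}\\\mathbf{Z}&\mathbf{W}\end{bmatrix}$ denotes the $d$-tuple $\left(\begin{bmatrix}X_k&Y_k\\Z_k&W_k\end{bmatrix}\right)_{k=1}^d$ of operators on $\mathscr H\oplus\mathscr H$. *)

(* Defs.v *)
From HB Require Import structures.
From mathcomp Require Import all_boot all_order all_algebra.
From mathcomp Require Import all_classical all_reals.
From mathcomp Require Import complex ereal.
Local Open Scope classical_set_scope.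
Set Implicit Arguments. Unset Strict Implicit. Unset Printing Implicit Defensive.
Import Order.TTheory GRing.Theory Num.Theory.
Local Open Scope ring_scope.

Definition cabs2 (R : realType) (z : R[i]) : R := (@complex.Re R z) ^+ 2 + (@complex.Im R z) ^+ 2.

Definition is_inner_product (R : realType) (H : lmodType R[i])
    (ip : H -> H -> R[i]) : Prop :=
  [/\ forall (a : R[i]) (x y z : H), ip (a *: x + y) z = a * ip x z + ip y z,
      forall x y : H, ip y x = (ip x y)^*,
      forall x : H, 0 <= ip x x
    & forall x : H, ip x x = 0 -> x = 0].

Definition ipnorm (R : realType) (H : lmodType R[i]) (ip : H -> H -> R[i])
    (x : H) : R := Num.sqrt (@complex.Re R (ip x x)).

Definition ip_complete (R : realType) (H : lmodType R[i])
    (ip : H -> H -> R[i]) : Prop :=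
  forall u : nat -> H,
    (forall e : R, 0 < e -> exists N : nat, forall m n : nat,
        (N <= m)%N -> (N <= n)%N -> ipnorm ip (u m - u n) < e) ->
    exists l : H, forall e : R, 0 < e -> exists N : nat, forall n : nat,
        (N <= n)%N -> ipnorm ip (u n - l) < e.

Definition is_hilbert (R : realType) (H : lmodType R[i])
    (ip : H -> H -> R[i]) : Prop :=
  is_inner_product ip /\ ip_complete ip.

Definition is_bounded_op (R : realType) (H : lmodType R[i])
    (ip : H -> H -> R[i]) (T : H -> H) : Prop :=
  linear T /\ exists M : R, forall x : H, ipnorm ip (T x) <= M * ipnorm ip x.

Definition w_e (R : realType) (V : Type) (ip : V -> V -> R[i]) (d : nat)
    (T : 'I_d -> V -> V) : \bar R :=
  ereal_sup [set (Num.sqrt (\sum_(k < d) cabs2 (ip (T k x) x)))%:E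
            | x in [set x : V | ip x x = 1]].

Definition ip_sum (R : realType) (H : lmodType R[i]) (ip : H -> H -> R[i])
    (u v : H * H) : R[i] := ip u.1 v.1 + ip u.2 v.2.

Definition block_op (R : realType) (H : lmodType R[i]) (A B C D : H -> H)
    (u : H * H) : H * H := (A u.1 + B u.2, C u.1 + D u.2).

Definition half_sum (R : realType) (H : lmodType R[i]) (d : nat)
    (S T : 'I_d -> H -> H) : 'I_d -> H -> H :=
  fun k x => (2%:R : R[i])^-1 *: (S k x + T k x).
Definition half_diff (R : realType) (H : lmodType R[i]) (d : nat)
    (S T : 'I_d -> H -> H) : 'I_d -> H -> H :=
  fun k x => (2%:R : R[i])^-1 *: (S k x - T k x).

(* Main.v *)
Require Import Defs.
From HB Require Import structures.
From mathcomp Require Import all_boot all_order all_algebra.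
From mathcomp Require Import all_classical all_reals.
From mathcomp Require Import complex ereal.
From mathcomp Require Import ring lra.
Import Order.TTheory GRing.Theory Num.Theory.
Local Open Scope complex_scope.
Local Open Scope ring_scope.

Section Cx.
Variable R : realType.
Implicit Types (z w a b : R[i]).

Lemma cabs2_ge0 z : 0 <= cabs2 z.
Proof. rewrite /cabs2; apply: addr_ge0; apply: sqr_ge0. Qed.

Lemma cabs2M a b : cabs2 (a * b) = cabs2 a * cabs2 b.
Proof. case: a => a1 a2; case: b => b1 b2; rewrite /cabs2 /=. ring. Qed.

Lemma cabs2_i : cabs2 ('i%C : R[i]) = 1.
Proof. rewrite /cabs2 /=. ring. Qed.

Lemma cabs2_real (c : R) : cabs2 (c%:C) = c ^+ 2.
Proof. rewrite /cabs2 /=. ring. Qed.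

Lemma cabs2N z : cabs2 (- z) = cabs2 z.
Proof. case: z => a1 a2; rewrite /cabs2 /=. ring. Qed.

Lemma cabs2_eq0 z : cabs2 z = 0 -> z = 0.
Proof.
case: z => a1 a2; rewrite /cabs2 /= => h.
have h1 : a1 = 0 by nra. have h2 : a2 = 0 by nra.
by rewrite h1 h2.
Qed.

Lemma cabs2_tri (al be : R) z w : 0 <= al -> 0 <= be ->
  al * be * cabs2 (z + w) <= be * (al + be) * cabs2 z + al * (al + be) * cabs2 w.
Proof.
case: z => a1 a2; case: w => b1 b2; rewrite /cabs2 /= => ha hb.
rewrite -subr_ge0.
have -> : be * (al + be) * (a1 ^+ 2 + a2 ^+ 2) + al * (al + be) * (b1 ^+ 2 + b2 ^+ 2) -
  al * be * ((a1 + b1) ^+ 2 + (a2 + b2) ^+ 2) = (be * a1 - al * b1) ^+ 2 + (be * a2 - al * b2) ^+ 2 by ring.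
by apply: addr_ge0; apply: sqr_ge0.
Qed.
Lemma conjR (x : R) : (x%:C : R[i])^* = x%:C.
Proof. exact: conjc_real. Qed.
End Cx.

Section En.
Variable R : realType.
Definition En (d : nat) (v : 'I_d -> R[i]) : R := Num.sqrt (\sum_(k < d) cabs2 (v k)).

Arguments En {d}.
Lemma En_ge0 {d} (v : 'I_d -> R[i]) : 0 <= En v. Proof. exact: sqrtr_ge0. Qed.

Lemma sum_cabs2_ge0 {d} (v : 'I_d -> R[i]) : 0 <= \sum_(k < d) cabs2 (v k).
Proof. by apply: sumr_ge0 => k _; exact: cabs2_ge0. Qed.

Lemma EnM {d} (a : R[i]) v : En (fun k : 'I_d => a * v k) = Num.sqrt (cabs2 a) * En v.
Proof.
rewrite /En (eq_bigr (fun k => cabs2 a * cabs2 (v k))); last by move=> k _; rewrite cabs2M.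
by rewrite -mulr_sumr sqrtrM // cabs2_ge0.
Qed.

Lemma sqrt_eq0_sum {d} {v : 'I_d -> R[i]} : En v = 0 -> forall k, v k = 0.
Proof.
move=> h k; apply: cabs2_eq0.
have hs : \sum_(k < d) cabs2 (v k) = 0.
  by move: h; rewrite /En => /eqP; rewrite sqrtr_eq0 => hl; apply/eqP; rewrite eq_le hl sum_cabs2_ge0.
by apply: (psumr_eq0P (P := xpredT) _ hs) => // i _; exact: cabs2_ge0.
Qed.

Lemma EnD {d} (v w : 'I_d -> R[i]) : En (fun k => v k + w k) <= En v + En w.
Proof.
have [a0|ap] := eqVneq (En v) 0.
  have hv := sqrt_eq0_sum a0.
  rewrite a0 add0r /En (eq_bigr (fun k => cabs2 (w k))) // => k _.
  by rewrite hv add0r.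
have [b0|bp] := eqVneq (En w) 0.
  have hw := sqrt_eq0_sum b0.
  rewrite b0 addr0 /En (eq_bigr (fun k => cabs2 (v k))) // => k _.
  by rewrite hw addr0.
have al0 : 0 < En v by rewrite lt_def ap En_ge0.
have be0 : 0 < En w by rewrite lt_def bp En_ge0.
set al := En v in al0 ap *; set be := En w in be0 bp *.
have hA : \sum_(k < d) cabs2 (v k) = al ^+ 2 by rewrite /al /En sqr_sqrtr // sum_cabs2_ge0.
have hB : \sum_(k < d) cabs2 (w k) = be ^+ 2 by rewrite /be /En sqr_sqrtr // sum_cabs2_ge0.
set C := \sum_(k < d) cabs2 (v k + w k).
have key : al * be * C <= al * be * (al + be) ^+ 2.
  rewrite /C mulr_sumr.
  apply: (le_trans (y := \sum_(k < d) (be * (al + be) * cabs2 (v k) + al * (al + be) * cabs2 (w k)))).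
    by apply: ler_sum => k _; apply: cabs2_tri; apply: ltW.
  rewrite big_split /= -!mulr_sumr hA hB.
  rewrite le_eqVlt; apply/orP; left; apply/eqP; ring.
have hC : C <= (al + be) ^+ 2.
  by move: key; rewrite ler_pM2l // mulr_gt0.
rewrite /En -/C.
apply: (le_trans (y := Num.sqrt ((al + be) ^+ 2))).
  by rewrite ler_sqrt // sqr_ge0.
by rewrite sqrtr_sqr ger0_norm // addr_ge0 // ltW.
Qed.
End En.
Arguments En {R d} v.
Arguments EnD {R d} v w.
Arguments EnM {R d} a v.
Arguments En_ge0 {R d} v.

Section Sup.
Variable R : realType.
Definition qf (V : Type) (ip : V -> V -> R[i]) (d : nat) (T : 'I_d -> V -> V) (x : V) : 'I_d -> R[i] :=
  fun k => ip (T k x) x.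

Arguments qf {V} ip {d} T x.
Lemma we_ub (V : Type) (ip : V -> V -> R[i]) d (T : 'I_d -> V -> V) v :
  ip v v = 1 -> ((En (qf ip T v))%:E <= w_e ip T)%E.
Proof. by move=> hv; apply: ereal_sup_ubound; exists v. Qed.

Lemma we_lub (V : Type) (ip : V -> V -> R[i]) d (T : 'I_d -> V -> V) (M : \bar R) :
  (forall v, ip v v = 1 -> ((En (qf ip T v))%:E <= M)%E) -> (w_e ip T <= M)%E.
Proof. by move=> h; apply: ge_ereal_sup => y [v hv <-]; exact: h. Qed.
End Sup.
Arguments qf {R V} ip {d} T x.
Arguments we_ub {R V ip d} T {v}.
Arguments we_lub {R V ip d T M}.

Section Nums.
Variable R : realType.
Definition tt2 : R[i] := (2%:R : R[i])^-1.
Definition c0 : R[i] := ((Num.sqrt (2%:R : R))^-1)%:C.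
Lemma conj_i : ('i%C : R[i])^* = - 'i%C.
Proof. by apply/eqP; rewrite eq_complex /= oppr0 !eqxx. Qed.
Lemma tt2E : tt2 = ((2%:R : R)^-1)%:C.
Proof. by rewrite /tt2 fmorphV /= rmorph_nat. Qed.
Lemma c0J : c0^* = c0. Proof. exact: conjR. Qed.
Lemma c0c0 : c0 * c0 = tt2.
Proof.
rewrite tt2E /c0 -rmorphM /= -invrM ?unitfE ?sqrtr_eq0 -?ltNge ?ltr0n //.
by rewrite -expr2 sqr_sqrtr // ler0n.
Qed.
Lemma tt2D : tt2 + tt2 = 1.
Proof. by rewrite /tt2; field. Qed.
Lemma sq_tt2 : Num.sqrt (cabs2 tt2) = (2%:R : R)^-1.
Proof. by rewrite tt2E cabs2_real sqrtr_sqr ger0_norm // invr_ge0 ler0n. Qed.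
Lemma cabs2_1 : cabs2 (1 : R[i]) = 1.
Proof. by rewrite /cabs2 /= expr1n expr0n addr0. Qed.
Lemma ii : ('i%C : R[i]) * 'i%C = -1.
Proof. by rewrite -expr2 sqr_i. Qed.
End Nums.
Arguments tt2 {R}.
Arguments c0 {R}.

Section IP.
Variable R : realType.
Variable H : lmodType R[i].
Variable ip : H -> H -> R[i].
Hypothesis hip : is_inner_product ip.

Lemma ipL a x y z : ip (a *: x + y) z = a * ip x z + ip y z.
Proof. by case: hip. Qed.
Lemma ipC x y : ip y x = (ip x y)^*.
Proof. by case: hip. Qed.

Lemma ipDl x y z : ip (x + y) z = ip x z + ip y z.
Proof. by rewrite -(scale1r x) ipL mul1r scale1r. Qed.
Lemma ip0l z : ip 0 z = 0.
Proof. have := ipDl 0 0 z; rewrite addr0 => h; apply: (addrI (ip 0 z)); by rewrite addr0 -h. Qed.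
Lemma ipZl a x z : ip (a *: x) z = a * ip x z.
Proof. by rewrite -(addr0 (a *: x)) ipL ip0l addr0. Qed.
Lemma ipNl x z : ip (- x) z = - ip x z.
Proof. by rewrite -scaleN1r ipZl mulN1r. Qed.
Lemma ipDr x y z : ip z (x + y) = ip z x + ip z y.
Proof. by rewrite ipC ipDl rmorphD /= -!ipC. Qed.
Lemma ipZr a x z : ip z (a *: x) = a^* * ip z x.
Proof. by rewrite ipC ipZl rmorphM /= -!ipC. Qed.
Lemma ip0r z : ip z 0 = 0.
Proof. by rewrite ipC ip0l; exact: conjc0. Qed.
Lemma ipNr x z : ip z (- x) = - ip z x.
Proof. by rewrite -scaleN1r ipZr rmorphN1 mulN1r. Qed.

Definition nrm x := complex.Re (ip x x).
Lemma ipxx x : ip x x = (nrm x)%:C.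
Proof.
case: hip => _ _ h _; have := h x; rewrite lecE => /andP [/eqP hi _].
by rewrite /nrm; case: (ip x x) hi => a b /= ->.
Qed.
Lemma nrm_ge0 x : 0 <= nrm x.
Proof. case: hip => _ _ h _; have := h x; rewrite lecE => /andP [_ ]; done. Qed.
Lemma nrm_eq0 x : nrm x = 0 -> x = 0.
Proof. case: hip => _ _ _ h; move=> e; apply: h; by rewrite ipxx e. Qed.

Definition lin (f : H -> H) := forall a x y, f (a *: x + y) = a *: f x + f y.

Lemma bounded_lin f : is_bounded_op ip f -> lin f.
Proof. by case=> h _ a x y; exact: h. Qed.

Section F.
Variable f : H -> H.
Hypothesis hf : lin f.
Lemma f0 : f 0 = 0.
Proof. have := hf 1 0 0; rewrite !scale1r addr0 => h; apply: (addrI (f 0)); by rewrite addr0 -h. Qed.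
Lemma fZ a x : f (a *: x) = a *: f x.
Proof. by rewrite -(addr0 (a *: x)) hf f0 addr0. Qed.
Lemma fD x y : f (x + y) = f x + f y.
Proof. by rewrite -(scale1r x) hf !scale1r. Qed.
Lemma fN x : f (- x) = - f x.
Proof. by rewrite -scaleN1r fZ scaleN1r. Qed.
End F.
Arguments f0 {f} hf.
Arguments fZ {f} hf a x.
Arguments fD {f} hf x y.
Arguments fN {f} hf x.

Lemma cabs2_0 : cabs2 (0 : R[i]) = 0.
Proof. by rewrite /cabs2 /= expr0n /= addr0. Qed.

Lemma qfZ d (T : 'I_d -> H -> H) (hT : forall k, lin (T k)) a u k :
  qf ip T (a *: u) k = (a * a^*) * qf ip T u k.
Proof. rewrite /qf fZ // ipZl // ipZr //; exact: mulrA. Qed.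

Lemma hom d (T : 'I_d -> H -> H) (hT : forall k, lin (T k)) (r : R) :
  w_e ip T = r%:E -> forall u, En (qf ip T u) <= r * nrm u.
Proof.
move=> hw u.
have [n0|np] := eqVneq (nrm u) 0.
  have u0 := @nrm_eq0 u n0.
  rewrite n0 mulr0 /En big1 ?sqrtr0 // => k _.
  by rewrite /qf u0 ip0r // cabs2_0.
have n0 : 0 < nrm u by rewrite lt_def np nrm_ge0.
set n := nrm u in n0 np *.
set s := Num.sqrt n.
have s0 : 0 < s by rewrite sqrtr_gt0.
have hsn : s ^+ 2 = n by rewrite sqr_sqrtr // ltW.
set c : R[i] := (s^-1)%:C.
have cc : c * c^* = (s^-1 * s^-1)%:C by rewrite /c conjR -rmorphM.
have hv : ip (c *: u) (c *: u) = 1.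
  rewrite ipZl // ipZr // mulrA cc ipxx -/n -rmorphM /=.
  have -> : s^-1 * s^-1 * n = 1 by rewrite -hsn; field; rewrite gt_eqF.
  done.
have := we_ub T hv; rewrite hw lee_fin.
have -> : qf ip T (c *: u) = fun k => (c * c^*) * qf ip T u k.
  by apply: funext => k; rewrite qfZ.
rewrite EnM cc cabs2_real sqrtr_sqr ger0_norm; last by rewrite mulr_ge0 // ltW // invr_gt0.
move=> h.
have -> : En (qf ip T u) = (s ^+ 2) * (s^-1 * s^-1 * En (qf ip T u)) by field; rewrite gt_eqF.
rewrite hsn mulrC ler_pM2r //.
Qed.


Lemma normalize u : nrm u != 0 -> exists v, ip v v = 1.
Proof.
move=> np.
have n0 : 0 < nrm u by rewrite lt_def np nrm_ge0.
set n := nrm u in n0 np *.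
set s := Num.sqrt n.
have s0 : 0 < s by rewrite sqrtr_gt0.
have hsn : s ^+ 2 = n by rewrite sqr_sqrtr // ltW.
exists ((s^-1)%:C *: u).
rewrite ipZl // ipZr // mulrA conjR -rmorphM ipxx -/n -rmorphM /=.
have -> : s^-1 * s^-1 * n = 1 by rewrite -hsn; field; rewrite gt_eqF.
done.
Qed.

Lemma we_neq_Ny d (T : 'I_d -> H -> H) u : nrm u != 0 -> w_e ip T != -oo%E.
Proof.
move=> /normalize [v hv]; have := we_ub T hv.
by case: (w_e ip T) => //.
Qed.

Variable d : nat.
Variables X Y Z W : 'I_d -> H -> H.
Hypotheses (hX : forall k, lin (X k)) (hY : forall k, lin (Y k))
  (hZ : forall k, lin (Z k)) (hW : forall k, lin (W k)).
Definition BB k := block_op (X k) (Y k) (Z k) (W k).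

Lemma qfB a b x k : qf (ip_sum ip) BB (a *: x, b *: x) k =
  a^* * a * qf ip X x k + a^* * b * qf ip Y x k + b^* * a * qf ip Z x k + b^* * b * qf ip W x k.
Proof.
rewrite /qf /ip_sum /BB /block_op /=.
rewrite !ipDl !(fZ (hX k)) !(fZ (hY k)) !(fZ (hZ k)) !(fZ (hW k)) !ipZl !ipZr.
ring.
Qed.

Lemma nB a b x : ip x x = 1 -> ip_sum ip (a *: x, b *: x) (a *: x, b *: x) = a^* * a + b^* * b.
Proof. by move=> hx; rewrite /ip_sum /= !ipZl !ipZr hx; ring. Qed.

Lemma lower_gen (tgt : 'I_d -> R[i]) a1 b1 a2 b2 s1 s2 x :
  ip x x = 1 -> a1^* * a1 + b1^* * b1 = 1 -> a2^* * a2 + b2^* * b2 = 1 ->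
  Num.sqrt (cabs2 s1) + Num.sqrt (cabs2 s2) <= 1 ->
  (forall k, tgt k = s1 * qf (ip_sum ip) BB (a1 *: x, b1 *: x) k
                     + s2 * qf (ip_sum ip) BB (a2 *: x, b2 *: x) k) ->
  ((En tgt)%:E <= w_e (ip_sum ip) BB)%E.
Proof.
move=> hx n1 n2 hs ht.
have h1 := we_ub BB (etrans (nB a1 b1 x hx) n1).
have h2 := we_ub BB (etrans (nB a2 b2 x hx) n2).
move: h1 h2; set E1 := En _; set E2 := En _.
case: (w_e (ip_sum ip) BB) => [r| |] h1 h2; [|by rewrite leey|by move: h1; rewrite leeNy_eq].
move: h1 h2; rewrite !lee_fin => h1 h2.
have -> : tgt = fun k => s1 * qf (ip_sum ip) BB (a1 *: x, b1 *: x) k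
                     + s2 * qf (ip_sum ip) BB (a2 *: x, b2 *: x) k by apply: funext.
set q1 := qf (ip_sum ip) BB (a1 *: x, b1 *: x).
set q2 := qf (ip_sum ip) BB (a2 *: x, b2 *: x).
have hD := EnD (fun k => s1 * q1 k) (fun k => s2 * q2 k).
apply: le_trans hD _.
rewrite !EnM -/E1 -/E2.
have r0 : 0 <= r by apply: le_trans h1; exact: En_ge0.
have g1 := sqrtr_ge0 (cabs2 s1); have g2 := sqrtr_ge0 (cabs2 s2).
have e1 : Num.sqrt (cabs2 s1) * E1 <= Num.sqrt (cabs2 s1) * r by exact: ler_wpM2l.
have e2 : Num.sqrt (cabs2 s2) * E2 <= Num.sqrt (cabs2 s2) * r by exact: ler_wpM2l.
nra.
Qed.

Lemma qfB' a b x k p1 p2 p3 p4 : a^* * a = p1 -> a^* * b = p2 -> b^* * a = p3 -> b^* * b = p4 ->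
  qf (ip_sum ip) BB (a *: x, b *: x) k =
  p1 * qf ip X x k + p2 * qf ip Y x k + p3 * qf ip Z x k + p4 * qf ip W x k.
Proof. by move=> <- <- <- <-; exact: qfB. Qed.

Lemma lowX : (w_e ip X <= w_e (ip_sum ip) BB)%E.
Proof.
apply: we_lub => x hx.
apply: (lower_gen (qf ip X x) 1 0 1 0 1 0 x hx).
- by rewrite rmorph1 rmorph0 mulr1 mulr0 addr0.
- by rewrite rmorph1 rmorph0 mulr1 mulr0 addr0.
- by rewrite cabs2_1 cabs2_0 sqrtr1 sqrtr0 addr0.
- move=> k; rewrite (qfB' _ _ x k (1) (0) (0) (0));
    rewrite ?rmorph1 ?rmorph0 ?mulr1 ?mulr0 //; ring.
Qed.

Lemma lowW : (w_e ip W <= w_e (ip_sum ip) BB)%E.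
Proof.
apply: we_lub => x hx.
apply: (lower_gen (qf ip W x) 0 1 0 1 1 0 x hx).
- by rewrite rmorph1 rmorph0 mulr1 mulr0 add0r.
- by rewrite rmorph1 rmorph0 mulr1 mulr0 add0r.
- by rewrite cabs2_1 cabs2_0 sqrtr1 sqrtr0 addr0.
- move=> k; rewrite (qfB' _ _ x k (0) (0) (0) (1));
    rewrite ?rmorph1 ?rmorph0 ?mulr1 ?mulr0 ?mul0r //; ring.
Qed.

Lemma sq_half : Num.sqrt (cabs2 tt2) + Num.sqrt (cabs2 (- tt2)) <= 1 :> R.
Proof. rewrite cabs2N sq_tt2; lra. Qed.

Lemma lowS : (w_e ip (half_sum Y Z) <= w_e (ip_sum ip) BB)%E.
Proof.
apply: we_lub => x hx.
apply: (lower_gen (qf ip (half_sum Y Z) x) c0 c0 c0 (- c0) tt2 (- tt2) x hx).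
- by rewrite c0J c0c0; exact: tt2D.
- by rewrite rmorphN /= mulrNN !c0J c0c0; exact: tt2D.
- exact: sq_half.
move=> k.
rewrite (qfB' _ _ x k (tt2) (tt2) (tt2) (tt2)) ?c0J ?c0c0 //.
rewrite (qfB' _ _ x k (tt2) (- tt2) (- tt2) (tt2));
  rewrite ?rmorphN /= ?c0J ?mulrN ?mulNr ?mulrNN ?opprK ?c0c0 //.
rewrite /qf /half_sum ipZl ipDl -/tt2 /tt2; by field.
Qed.

Lemma lowD : (w_e ip (half_diff Y Z) <= w_e (ip_sum ip) BB)%E.
Proof.
apply: we_lub => x hx.
have hc : (c0 : R[i]) * ('i%C * c0) = tt2 * 'i%C by rewrite -c0c0; ring.
have hb : ((c0 : R[i]) * 'i%C)^* * (c0 * 'i%C) = tt2.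
  rewrite rmorphM /= c0J conj_i.
  transitivity ((c0 : R[i]) * c0 * - ('i%C * 'i%C)); first by ring.
  by rewrite ii opprK mulr1 c0c0.
have := lower_gen (fun k => 'i%C * qf ip (half_diff Y Z) x k) c0 (c0 * 'i%C) c0 (- (c0 * 'i%C))
   tt2 (- tt2) x hx.
rewrite EnM cabs2_i sqrtr1 mul1r; apply.
- by rewrite c0J c0c0 hb; exact: tt2D.
- by rewrite rmorphN /= mulrNN c0J c0c0 hb; exact: tt2D.
- exact: sq_half.
move=> k.
rewrite (qfB' _ _ x k (tt2) (tt2 * 'i%C) (- (tt2 * 'i%C)) (tt2));
  [ | by rewrite c0J c0c0 | by rewrite c0J -c0c0; ring
    | by rewrite rmorphM /= c0J conj_i -c0c0; ring | exact: hb].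
rewrite (qfB' _ _ x k (tt2) (- (tt2 * 'i%C)) (tt2 * 'i%C) (tt2));
  [ | by rewrite c0J c0c0 | by rewrite c0J -c0c0; ring
    | by rewrite rmorphN /= rmorphM /= c0J conj_i -c0c0; ring
    | by rewrite rmorphN /= mulrNN hb].
rewrite /qf /half_diff ipZl ipDl ipNl /tt2; by field.
Qed.



Lemma lin_hs k : lin (half_sum Y Z k).
Proof.
move=> a u v; rewrite /half_sum (hY k) (hZ k) !scalerDr !scalerA (mulrC _ a).
by rewrite addrACA.
Qed.

Lemma lin_hd k : lin (half_diff Y Z k).
Proof.
move=> a u v; rewrite /half_diff (hY k) (hZ k) opprD !scalerDr !scalerA (mulrC _ a).
by rewrite addrACA scalerN scalerA (mulrC _ a) -scalerN.
Qed.

Lemma decomp x y k : 'i%C * qf (ip_sum ip) BB (x, y) k =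
  'i%C * qf ip X x k + 'i%C * qf ip W y k
  + ('i%C * tt2) * qf ip (half_sum Y Z) (x + y) k + (- ('i%C * tt2)) * qf ip (half_sum Y Z) (x - y) k
  + tt2 * qf ip (half_diff Y Z) (x + 'i%C *: y) k + (- tt2) * qf ip (half_diff Y Z) (x - 'i%C *: y) k.
Proof.
rewrite /qf /ip_sum /BB /block_op /half_sum /half_diff /=.
rewrite ?(fD (hY k)) ?(fD (hZ k)) ?(fN (hY k)) ?(fN (hZ k)) ?(fZ (hY k)) ?(fZ (hZ k)).
rewrite !(ipZl, ipDl, ipNl, ipDr, ipNr, ipZr) conj_i /tt2.
by field.
Qed.

Lemma para x y : nrm (x + y) + nrm (x - y) = 2%:R * (nrm x + nrm y).
Proof.
apply: complexI; rewrite !rmorphD !rmorphM /= !rmorphD /= ?rmorph1 -!ipxx.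
rewrite !(ipDl, ipNl, ipDr, ipNr); ring.
Qed.

Lemma nrm_i y : nrm ('i%C *: y) = nrm y.
Proof.
apply: complexI; rewrite -!ipxx ipZl ipZr conj_i.
transitivity (- ('i%C * 'i%C) * ip y y); first by ring.
by rewrite ii opprK mul1r.
Qed.

Lemma En6 (c1 c2 c3 c4 c5 c6 : R[i]) (v1 v2 v3 v4 v5 v6 : 'I_d -> R[i]) :
  En (fun k => c1 * v1 k + c2 * v2 k + c3 * v3 k + c4 * v4 k + c5 * v5 k + c6 * v6 k) <=
  Num.sqrt (cabs2 c1) * En v1 + Num.sqrt (cabs2 c2) * En v2 + Num.sqrt (cabs2 c3) * En v3 +
  Num.sqrt (cabs2 c4) * En v4 + Num.sqrt (cabs2 c5) * En v5 + Num.sqrt (cabs2 c6) * En v6.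
Proof.
rewrite -!EnM.
apply: le_trans; first exact: EnD.
rewrite lerD2r; apply: le_trans; first exact: EnD.
rewrite lerD2r; apply: le_trans; first exact: EnD.
rewrite lerD2r; apply: le_trans; first exact: EnD.
rewrite lerD2r; apply: le_trans; first exact: EnD.
by [].
Qed.

Lemma up (rX rW rS rD : R) : w_e ip X = rX%:E -> w_e ip W = rW%:E ->
  w_e ip (half_sum Y Z) = rS%:E -> w_e ip (half_diff Y Z) = rD%:E ->
  forall x y, ip_sum ip (x, y) (x, y) = 1 ->
  En (qf (ip_sum ip) BB (x, y)) <= Num.max rX rW + rS + rD.
Proof.
move=> eX eW eS eD x y hu.
have hn : nrm x + nrm y = 1.
  apply: complexI; rewrite rmorphD /= -!ipxx; exact: hu.
have e : En (qf (ip_sum ip) BB (x, y)) = En (fun k => 'i%C * qf (ip_sum ip) BB (x, y) k).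
  by rewrite EnM cabs2_i sqrtr1 mul1r.
rewrite e (funext (decomp x y)).
apply: le_trans; first exact: En6.
rewrite cabs2_i !cabs2N cabs2M cabs2_i mul1r sq_tt2 sqrtr1 !mul1r.
have bX := hom _ _ hX _ eX x; have bW := hom _ _ hW _ eW y.
have bS1 := hom _ _ lin_hs _ eS (x + y); have bS2 := hom _ _ lin_hs _ eS (x - y).
have bD1 := hom _ _ lin_hd _ eD (x + 'i%C *: y); have bD2 := hom _ _ lin_hd _ eD (x - 'i%C *: y).
have p1 := para x y; have p2 := para x ('i%C *: y); rewrite nrm_i in p2.
have nx := nrm_ge0 x; have ny := nrm_ge0 y.
have mX : rX <= Num.max rX rW by rewrite le_max lexx.
have mW : rW <= Num.max rX rW by rewrite le_max lexx orbT.
set m := Num.max rX rW in mX mW *.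
have f1 : rX * nrm x <= m * nrm x by exact: ler_wpM2r.
have f2 : rW * nrm y <= m * nrm y by exact: ler_wpM2r.
have f3 : rS * nrm (x + y) + rS * nrm (x - y) = 2%:R * rS by rewrite -mulrDr p1 hn mulr1 mulrC.
have f4 : rD * nrm (x + 'i%C *: y) + rD * nrm (x - 'i%C *: y) = 2%:R * rD
  by rewrite -mulrDr p2 hn mulr1 mulrC.
have f5 : m * nrm x + m * nrm y = m by rewrite -mulrDr hn mulr1.
lra.
Qed.
End IP.

Local Open Scope ereal_scope.

Lemma aux (R : realType) (e : R) (a b c dd : \bar R) :
  a != -oo -> b != -oo -> c != -oo -> dd != -oo ->
  (forall ra rb rc rd, a = ra%:E -> b = rb%:E -> c = rc%:E -> dd = rd%:E ->
     (e <= Num.max ra rb + rc + rd)%R) ->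
  e%:E <= maxe a b + c + dd.
Proof.
case: a => [ra| |] // _; case: b => [rb| |] // _; case: c => [rc| |] // _;
  case: dd => [rd| |] // _ h;
  rewrite /= ?maxye ?maxey ?addye ?addey ?leey //.
all: rewrite -?EFin_max -?EFinD //.
by rewrite lee_fin; apply: h.
Qed.

Theorem mainTheorem18 (R : realType) (H : lmodType R[i]) (ip : H -> H -> R[i])
  (hH : is_hilbert ip) (d : nat) (X Y Z W : 'I_d -> H -> H)
  (hX : forall k, is_bounded_op ip (X k)) (hY : forall k, is_bounded_op ip (Y k))
  (hZ : forall k, is_bounded_op ip (Z k)) (hW : forall k, is_bounded_op ip (W k)) :
  let B := fun k => block_op (X k) (Y k) (Z k) (W k) in
  maxe (maxe (w_e ip X) (w_e ip W))
       (maxe (w_e ip (half_sum Y Z)) (w_e ip (half_diff Y Z)))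
    <= w_e (ip_sum ip) B
  /\ w_e (ip_sum ip) B
    <= maxe (w_e ip X) (w_e ip W) + w_e ip (half_sum Y Z) + w_e ip (half_diff Y Z).
Proof.
move=> B.
have lX : forall k, lin R H (X k) by move=> k; exact: bounded_lin (hX k).
have lY : forall k, lin R H (Y k) by move=> k; exact: bounded_lin (hY k).
have lZ : forall k, lin R H (Z k) by move=> k; exact: bounded_lin (hZ k).
have lW : forall k, lin R H (W k) by move=> k; exact: bounded_lin (hW k).
case: hH => hip _.
split.
  rewrite !ge_max.
  rewrite (lowX _ _ _ hip _ _ _ _ _ lX lY lZ lW) (lowW _ _ _ hip _ _ _ _ _ lX lY lZ lW).
  by rewrite (lowS _ _ _ hip _ _ _ _ _ lX lY lZ lW) (lowD _ _ _ hip _ _ _ _ _ lX lY lZ lW).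
apply: we_lub => -[x y] hu.
have hn : (nrm R H ip x + nrm R H ip y = 1)%R.
  apply: complexI; rewrite rmorphD /= -!(ipxx _ _ _ hip); exact: hu.
have [u hu0] : exists u, nrm R H ip u != 0%R.
  have [hx|hx] := eqVneq (nrm R H ip x) 0%R; last by exists x.
  exists y; rewrite hx add0r in hn; by rewrite hn oner_eq0.
apply: aux; try exact: (we_neq_Ny _ _ _ hip _ _ _ hu0).
move=> rX rW rS rD eX eW eS eD.
exact: (up _ _ _ hip _ _ _ _ _ lX lY lZ lW _ _ _ _ eX eW eS eD _ _ hu).
Qed.
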